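(* Let $n\ge0$ be an integer. Define $Q,\tilde Q:(\max\{\sqrt{\chi_n}/c,1\},\infty)\to\mathbb R$ by $$Q(t)=\psi_n^2(t)+\frac{(t^2-1)(\psi_n'(t))^2}{c^2t^2-\chi_n},\qquad \tilde Q(t)=(t^2-1)\big((c^2t^2-\chi_n)\psi_n^2(t)+(t^2-1)(\psi_n'(t))^2\big).$$ Then $Q$ is decreasing and $\tilde Q$ is increasing on $(\max\{\sqrt{\chi_n}/c,1\},\infty)$.
   Context: For a real number $c>0$, let $\psi_0,\psi_1,\dots$ be the prolate spheroidal wave functions of band limit $c$: the real $L^2[-1,1]$-normalized eigenfunctions of $F_c[\varphi](x)=\int_{-1}^1\varphi(t)e^{icxt}\,dt$ with eigenvalues $\lambda_n$ ordered by $|\lambda_n|\ge|\lambda_{n+1}|$, extended to entire functions by $\lambda_n\psi_n(x)=\int_{-1}^1\psi_n(t)e^{icxt}\,dt$. $\chi_0<\chi_1<\dots$ are the positive numbers such that $\psi_n$ satisfies $(1-x^2)\psi''(x)-2x\psi'(x)+(\chi_n-c^2x^2)\psi(x)=0$ for all real $x$. *)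

(* Defs.v *)
From Stdlib Require Import Reals Lra List.
From Coquelicot Require Import Coquelicot.
Open Scope R_scope.

Definition cis (theta : R) : C := (cos theta, sin theta).

Definition Fc_integrand (c : R) (phi : R -> R) (x : R) : R -> C :=
  fun t => (RtoC (phi t) * cis (c * x * t))%C.

Definition Fc (c : R) (phi : R -> R) (x : R) : C :=
  @RInt C_R_CompleteNormedModule (Fc_integrand c phi x) (-1) 1.

(* (phi, lam) is an eigenpair of F_c, phi real and L^2[-1,1]-normalized,
   and phi is extended to all of R by  lam * phi(x) = F_c[phi](x). *)
Definition pswf_eigenpair (c : R) (phi : R -> R) (lam : C) : Prop :=
  ex_RInt (fun t => phi t ^ 2) (-1) 1 /\
  RInt (fun t => phi t ^ 2) (-1) 1 = 1 /\
  (forall x : R, @ex_RInt C_R_NormedModule (Fc_integrand c phi x) (-1) 1) /\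
  (forall x : R, (lam * RtoC (phi x))%C = Fc c phi x).

Definition Fc_eigenvalue (c : R) (mu : C) : Prop :=
  exists phi : R -> R, pswf_eigenpair c phi mu.

(* psi is (a choice of) the n-th prolate spheroidal wave function of band
   limit c, with eigenvalue lam: exactly n eigenvalues of F_c have modulus
   strictly larger than |lam| (ordering |lam_0| >= |lam_1| >= ...). *)
Definition is_pswf (c : R) (n : nat) (psi : R -> R) (lam : C) : Prop :=
  pswf_eigenpair c psi lam /\
  exists l : list C, length l = n /\ NoDup l /\
    forall mu : C, In mu l <-> (Fc_eigenvalue c mu /\ Cmod lam < Cmod mu).

Definition prolate_ode (c chi : R) (psi : R -> R) : Prop :=
  (forall x, ex_derive psi x) /\
  (forall x, ex_derive (Derive psi) x) /\
  (forall x, (1 - x ^ 2) * Derive (Derive psi) x - 2 * x * Derive psi x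
             + (chi - c ^ 2 * x ^ 2) * psi x = 0).

Definition Qfun (c chi : R) (psi : R -> R) (t : R) : R :=
  psi t ^ 2 + (t ^ 2 - 1) * (Derive psi t) ^ 2 / (c ^ 2 * t ^ 2 - chi).

Definition Qtilde (c chi : R) (psi : R -> R) (t : R) : R :=
  (t ^ 2 - 1) * ((c ^ 2 * t ^ 2 - chi) * psi t ^ 2 + (t ^ 2 - 1) * (Derive psi t) ^ 2).

(* Main.v *)
Require Import Defs.
From Stdlib Require Import Reals Lra Psatz Classical.
From Coquelicot Require Import Coquelicot.
Open Scope R_scope.

Lemma cont_of_der (f : R -> R) x : ex_derive f x -> continuity_pt f x.
Proof. intros H. apply continuity_pt_filterlim. apply (ex_derive_continuous f x H). Qed.

Lemma cont_eps (f : R -> R) x eps : continuity_pt f x -> 0 < eps ->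
  exists d, 0 < d /\ forall y, Rabs (y - x) < d -> Rabs (f y - f x) < eps.
Proof.
  intros H He. destruct (H eps He) as [d [Hd Hy]]. exists d. split; auto.
  intros y Hyd. destruct (Req_dec y x) as [->|Hne].
  - rewrite Rminus_diag, Rabs_R0; auto.
  - apply (Hy y). split. split; [exact I| auto]. exact Hyd.
Qed.

Lemma const_deriv (f : R -> R) x0 eta l : 0 < eta ->
  (forall y, x0 <= y <= x0 + eta -> f y = f x0) -> is_derive f x0 l -> l = 0.
Proof.
  intros He Hc Hd. apply is_derive_Reals in Hd.
  destruct (Req_dec l 0) as [|Hl]; auto. exfalso.
  assert (Hp : 0 < Rabs l / 2) by (apply Rabs_pos_lt in Hl; lra).
  destruct (Hd _ Hp) as [d Hdd].
  set (h := Rmin (d/2) eta).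
  assert (Hh : 0 < h) by (unfold h; apply Rmin_pos; [destruct d; simpl; lra| lra]).
  assert (Hh2 : h <= d/2) by apply Rmin_l.
  assert (Hh3 : h <= eta) by apply Rmin_r.
  specialize (Hdd h ltac:(lra)).
  rewrite Hc in Hdd by lra.
  rewrite Rminus_diag in Hdd. unfold Rdiv in Hdd. rewrite Rmult_0_l in Hdd.
  assert (Hpd := cond_pos d).
  assert (Rabs h < d) by (rewrite Rabs_pos_eq; lra).
  specialize (Hdd H). rewrite Rminus_0_l, Rabs_Ropp in Hdd. lra.
Qed.

Lemma geom K x0 : 0 <= K -> -1 < x0 -> exists d B, 0 < d /\ d <= 1 /\ 0 <= B /\ K * B * d < 1 /\
  forall y, x0 - d <= y < x0 -> 1 - y ^ 2 <> 0 /\ x0 - y <= B * Rabs (1 - y ^ 2).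
Proof.
  intros HK Hx.
  destruct (Rtotal_order x0 1) as [Hlt|[Heq|Hgt]].
  - set (m := (1 - x0) * (x0 + 1) / 4).
    assert (Hm : 0 < m) by (unfold m; nra).
    set (d := Rmin (Rmin 1 ((x0+1)/2)) (m / (K+1))).
    assert (Hd1 : d <= 1) by (unfold d; eapply Rle_trans; [apply Rmin_l|apply Rmin_l]).
    assert (Hd2 : d <= (x0+1)/2) by (unfold d; eapply Rle_trans; [apply Rmin_l|apply Rmin_r]).
    assert (Hd3 : d <= m/(K+1)) by (unfold d; apply Rmin_r).
    assert (Hd0 : 0 < d). { unfold d. apply Rmin_pos. apply Rmin_pos; lra.
      apply Rdiv_lt_0_compat; lra. }
    exists d, (d / m). split; [lra|]. split; [lra|]. split.
    { apply Rlt_le, Rdiv_lt_0_compat; lra. }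
    split.
    { assert (Hdm : d * (K+1) <= m).
      { apply (Rmult_le_reg_r (/(K+1))). apply Rinv_0_lt_compat; lra.
        rewrite Rmult_assoc, Rinv_r by lra. unfold Rdiv in Hd3. lra. }
      replace (K * (d / m) * d) with (K * d * d / m) by (field; lra).
      apply (Rmult_lt_reg_r m); [lra|]. unfold Rdiv. rewrite Rmult_assoc, Rinv_l by lra.
      nra. }
    intros y Hy.
    assert (H1 : 1 - y ^ 2 >= m).
    { unfold m. nra. }
    split; [lra|]. rewrite Rabs_pos_eq by lra.
    replace (d / m * (1 - y ^ 2)) with (d * ((1 - y^2) / m)) by (field; lra).
    assert (1 <= (1 - y^2)/m).
    { apply (Rmult_le_reg_r m); [lra|]. unfold Rdiv. rewrite Rmult_assoc, Rinv_l by lra. lra. }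
    nra.
  - subst x0. set (d := 1 / (2*K+2)).
    assert (Hd0 : 0 < d) by (unfold d; apply Rdiv_lt_0_compat; lra).
    assert (Hd1 : d * (2*K+2) = 1) by (unfold d; field; lra).
    assert (Hdh : d <= 1/2) by nra.
    exists d, 1. split; [lra|]. split; [lra|]. split; [lra|]. split; [nra|].
    intros y Hy. assert (0 < 1 - y) by lra. assert (1 <= 1 + y) by lra.
    replace (1 - y^2) with ((1-y)*(1+y)) by ring.
    split; [nra|]. rewrite Rabs_pos_eq by nra. nra.
  - set (m := (x0 - 1) * (x0 + 1) / 4).
    assert (Hm : 0 < m) by (unfold m; nra).
    set (d := Rmin (Rmin 1 ((x0-1)/2)) (m / (K+1))).
    assert (Hd1 : d <= 1) by (unfold d; eapply Rle_trans; [apply Rmin_l|apply Rmin_l]).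
    assert (Hd2 : d <= (x0-1)/2) by (unfold d; eapply Rle_trans; [apply Rmin_l|apply Rmin_r]).
    assert (Hd3 : d <= m/(K+1)) by (unfold d; apply Rmin_r).
    assert (Hd0 : 0 < d). { unfold d. apply Rmin_pos. apply Rmin_pos; lra.
      apply Rdiv_lt_0_compat; lra. }
    exists d, (d / m). split; [lra|]. split; [lra|]. split.
    { apply Rlt_le, Rdiv_lt_0_compat; lra. }
    split.
    { assert (Hdm : d * (K+1) <= m).
      { apply (Rmult_le_reg_r (/(K+1))). apply Rinv_0_lt_compat; lra.
        rewrite Rmult_assoc, Rinv_r by lra. unfold Rdiv in Hd3. lra. }
      replace (K * (d / m) * d) with (K * d * d / m) by (field; lra).
      apply (Rmult_lt_reg_r m); [lra|]. unfold Rdiv. rewrite Rmult_assoc, Rinv_l by lra.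
      nra. }
    intros y Hy.
    assert (H1 : y ^ 2 - 1 >= m).
    { unfold m. nra. }
    split; [lra|]. rewrite Rabs_left by lra.
    replace (d / m * - (1 - y ^ 2)) with (d * ((y^2 - 1) / m)) by (field; lra).
    assert (1 <= (y^2 - 1)/m).
    { apply (Rmult_le_reg_r m); [lra|]. unfold Rdiv. rewrite Rmult_assoc, Rinv_l by lra. lra. }
    nra.
Qed.

Lemma u_deriv c chi psi x : prolate_ode c chi psi ->
  is_derive (fun t => (1 - t^2) * Derive psi t) x ((c^2 * x^2 - chi) * psi x).
Proof.
  intros [H1 [H2 H3]]. auto_derive.
  - apply H2.
  - specialize (H3 x). replace (Derive (fun x0 => Derive psi x0) x) with (Derive (Derive psi) x) by reflexivity.
    lra.
Qed.

Lemma abs_le_K c chi x0 e : x0 - 1 <= e <= x0 ->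
  Rabs (c^2 * e^2 - chi) <= c^2 * (Rabs x0 + 1)^2 + Rabs chi.
Proof.
  intros He.
  assert (e^2 <= (Rabs x0 + 1)^2).
  { destruct (Rcase_abs x0) as [Hn|Hp]; [rewrite Rabs_left by lra|rewrite Rabs_pos_eq by lra]; nra. }
  eapply Rle_trans. apply Rabs_triang. rewrite Rabs_Ropp.
  rewrite Rabs_pos_eq by (apply Rmult_le_pos; apply pow2_ge_0).
  assert (0 <= c^2) by apply pow2_ge_0. nra.
Qed.

Lemma local_zero c chi psi x0 eta : prolate_ode c chi psi -> -1 < x0 -> 0 < eta ->
  (forall y, x0 <= y <= x0 + eta -> psi y = 0) ->
  exists d, 0 < d /\ forall y, x0 - d <= y <= x0 -> psi y = 0.
Proof.
  intros Hode Hx He Hz.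
  pose proof Hode as [Hd1 [Hd2 Hd3]].
  assert (P1 : Derive psi x0 = 0).
  { apply (const_deriv psi x0 eta); auto.
    intros y Hy. rewrite (Hz y Hy), (Hz x0); lra.
    apply Derive_correct, Hd1. }
  set (K := c^2 * (Rabs x0 + 1)^2 + Rabs chi).
  assert (HK : 0 <= K).
  { unfold K. assert (0 <= c^2) by apply pow2_ge_0. assert (0 <= (Rabs x0 + 1)^2) by apply pow2_ge_0.
    assert (0 <= Rabs chi) by apply Rabs_pos. nra. }
  destruct (geom K x0 HK Hx) as [d [B [Hd0 [Hd1' [HB [HKB Hg]]]]]].
  exists d. split; auto.
  destruct (continuity_ab_maj (fun y => Rabs (psi y)) (x0 - d) x0) as [ym [Hym Hymr]].
  { lra. }
  { intros y _. apply (continuity_pt_comp psi Rabs). apply cont_of_der, Hd1. apply Rcontinuity_abs. }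
  simpl in Hym. set (M := Rabs (psi ym)) in *.
  assert (HM0 : 0 <= M) by apply Rabs_pos.
  assert (Key : forall y, x0 - d <= y <= x0 -> Rabs (psi y) <= K * B * d * M).
  { intros y Hy. destruct (Req_dec y x0) as [->|Hne].
    { rewrite (Hz x0) by lra. rewrite Rabs_R0. repeat apply Rmult_le_pos; lra. }
    assert (Hyl : y < x0) by lra.
    destruct (MVT_gen psi y x0 (Derive psi)) as [xi [Hxi Hmvt]].
    { intros x _. apply Derive_correct, Hd1. }
    { intros x _. apply cont_of_der, Hd1. }
    rewrite Rmin_left, Rmax_right in Hxi by lra.
    assert (Hdxi : Rabs (Derive psi xi) <= K * B * M).
    { destruct (Req_dec xi x0) as [->|Hne2].
      { rewrite P1, Rabs_R0. repeat apply Rmult_le_pos; lra. }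
      destruct (Hg xi ltac:(lra)) as [Hnz Hle].
      destruct (MVT_gen (fun t => (1 - t^2) * Derive psi t) xi x0 (fun x => (c^2 * x^2 - chi) * psi x)) as [e [He2 Hmv2]].
      { intros x _. apply u_deriv, Hode. }
      { intros x _. eapply cont_of_der. eexists. apply u_deriv, Hode. }
      rewrite Rmin_left, Rmax_right in He2 by lra.
      rewrite P1, Rmult_0_r in Hmv2.
      assert (HuE : Rabs ((1 - xi^2) * Derive psi xi) <= K * M * (x0 - xi)).
      { replace ((1 - xi^2) * Derive psi xi) with (- ((c^2*e^2-chi) * psi e * (x0 - xi))) by lra.
        rewrite Rabs_Ropp, !Rabs_mult, (Rabs_pos_eq (x0 - xi)) by lra.
        apply Rmult_le_compat_r; [lra|]. apply Rmult_le_compat; try apply Rabs_pos.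
        apply abs_le_K; lra. apply Hym; lra. }
      rewrite Rabs_mult in HuE.
      assert (Hp : 0 < Rabs (1 - xi^2)) by (apply Rabs_pos_lt; auto).
      apply (Rmult_le_reg_l (Rabs (1 - xi^2))); auto.
      assert (0 <= K * M) by (repeat apply Rmult_le_pos; lra). nra. }
    replace (psi y) with (- (Derive psi xi * (x0 - y))) by (rewrite (Hz x0) in Hmvt by lra; lra).
    rewrite Rabs_Ropp, Rabs_mult, (Rabs_pos_eq (x0 - y)) by lra.
    assert (0 <= K*B*M) by (repeat apply Rmult_le_pos; lra).
    apply Rle_trans with (K * B * M * (x0 - y)). apply Rmult_le_compat_r; lra.
    nra. }
  assert (HMle : M <= K * B * d * M) by (apply Key; auto).
  assert (HM : M = 0) by nra.
  intros y Hy. assert (H := Hym y Hy). rewrite HM in H.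
  assert (Rabs (psi y) = 0) by (pose proof (Rabs_pos (psi y)); lra).
  destruct (Req_dec (psi y) 0); auto. apply Rabs_no_R0 in H1. contradiction.
Qed.

Lemma zero_contra c chi psi a b : prolate_ode c chi psi ->
  RInt (fun t => psi t ^ 2) (-1) 1 = 1 -> 1 <= a -> a < b ->
  (forall y, a <= y <= b -> psi y = 0) -> False.
Proof.
  intros Hode HI Ha Hab Hz.
  pose proof Hode as [Hd1 _].
  set (E := fun d => 0 <= d <= a + 1 /\ forall y, a - d <= y <= b -> psi y = 0).
  assert (HE0 : E 0) by (split; [lra| intros y Hy; apply Hz; lra]).
  destruct (completeness E) as [D [Hub Hlub]].
  { exists (a+1). intros d Hd. apply Hd. }
  { exists 0; auto. }
  assert (HD0 : 0 <= D) by (apply Hub; auto).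
  assert (HD1 : D <= a + 1) by (apply Hlub; intros d Hd; apply Hd).
  assert (Hopen : forall y, a - D < y <= b -> psi y = 0).
  { intros y Hy. destruct (classic (exists d, E d /\ a - d <= y)) as [[d [[_ Hd] Hdy]]|Hn].
    - apply Hd; lra.
    - exfalso. assert (D <= a - y).
      { apply Hlub. intros d Hd. destruct (Rle_dec (a - d) y) as [Hle|Hle].
        + exfalso; apply Hn; exists d; auto.
        + lra. }
      lra. }
  assert (Hcl : psi (a - D) = 0).
  { destruct (Req_dec D 0) as [->|HDn].
    - apply Hz; lra.
    - destruct (Req_dec (psi (a - D)) 0) as [|Hne]; auto. exfalso.
      destruct (cont_eps psi (a - D) (Rabs (psi (a - D)))) as [del [Hdel Hc]].
      + apply cont_of_der, Hd1.
      + apply Rabs_pos_lt; auto.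
      + set (y := a - D + Rmin (del/2) (D/2)).
        assert (0 < Rmin (del/2) (D/2)) by (apply Rmin_pos; lra).
        assert (Rmin (del/2) (D/2) <= del/2) by apply Rmin_l.
        assert (Rmin (del/2) (D/2) <= D/2) by apply Rmin_r.
        assert (Hy0 : psi y = 0) by (apply Hopen; unfold y; lra).
        specialize (Hc y). rewrite Hy0, Rminus_0_l, Rabs_Ropp in Hc.
        assert (Rabs (y - (a - D)) < del) by (unfold y; rewrite Rabs_pos_eq; lra).
        specialize (Hc H2). lra. }
  assert (Hall : forall y, a - D <= y <= b -> psi y = 0).
  { intros y Hy. destruct (Req_dec y (a - D)) as [->|]; auto. apply Hopen; lra. }
  destruct (Rle_lt_or_eq_dec D (a+1) HD1) as [Hlt|Heq].
  - destruct (local_zero c chi psi (a - D) (b - (a - D)) Hode) as [del [Hdel Hloc]].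
    + lra.
    + lra.
    + intros y Hy. apply Hall; lra.
    + assert (Hm : E (Rmin (D + del) (a + 1))).
      { split. split. apply Rmin_glb; lra. apply Rmin_r.
        intros y Hy. destruct (Rle_dec (a - D) y).
        - apply Hall; lra.
        - apply Hloc. assert (Rmin (D + del) (a + 1) <= D + del) by apply Rmin_l. lra. }
      apply Hub in Hm. assert (D < Rmin (D + del) (a + 1)) by (apply Rmin_glb_lt; lra). lra.
  - assert (HR : RInt (fun t => psi t ^ 2) (-1) 1 = RInt (fun _ => 0) (-1) 1).
    { apply RInt_ext. intros x Hx. rewrite Rmin_left, Rmax_right in Hx by lra.
      rewrite Hall by lra. change (0 ^ 2 = 0). ring. }
    rewrite HR, RInt_const in HI. unfold scal in HI; simpl in HI; unfold mult in HI; simpl in HI. lra.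
Qed.

Lemma flat (f df : R -> R) s t : s < t ->
  (forall x, s <= x <= t -> is_derive f x (df x)) ->
  (forall x, s <= x <= t -> 0 <= df x) ->
  f s <= f t /\ (f t <= f s -> forall y, s < y < t -> df y = 0).
Proof.
  intros Hst Hd Hp.
  assert (Hmono : forall a b, s <= a -> a < b -> b <= t -> f a <= f b).
  { intros a b Ha Hab Hb.
    destruct (MVT_gen f a b df) as [xi [Hxi Hm]].
    - intros x Hx. rewrite Rmin_left, Rmax_right in Hx by lra. apply Hd; lra.
    - intros x Hx. rewrite Rmin_left, Rmax_right in Hx by lra. apply cont_of_der.
      eexists. apply Hd; lra.
    - rewrite Rmin_left, Rmax_right in Hxi by lra.
      assert (0 <= df xi) by (apply Hp; lra). nra. }
  split. apply Hmono; lra.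
  intros Hts.
  assert (Hc : forall y, s <= y <= t -> f y = f s).
  { intros y Hy. destruct (Req_dec y s) as [->|]; auto.
    destruct (Req_dec y t) as [->|]. apply Rle_antisym; auto. apply Hmono; lra.
    assert (f s <= f y) by (apply Hmono; lra). assert (f y <= f t) by (apply Hmono; lra). lra. }
  intros y Hy. apply (const_deriv f y (t - y)). lra.
  intros z Hz. rewrite (Hc z), (Hc y); lra. apply Hd; lra.
Qed.

Lemma Qt_deriv c chi psi y : prolate_ode c chi psi -> 1 < y ->
  is_derive (Qtilde c chi psi) y ((2*y*(c^2*y^2-chi) + (y^2-1)*(2*c^2*y)) * psi y ^ 2).
Proof.
  intros [H1 [H2 H3]] Hy. unfold Qtilde. auto_derive.
  - repeat split; auto.
  - change (Derive (fun x => psi x) y) with (Derive psi y).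
    change (Derive (fun x => Derive psi x) y) with (Derive (Derive psi) y).
    specialize (H3 y).
    assert (HP2 : Derive (Derive psi) y = (2 * y * Derive psi y - (chi - c^2*y^2) * psi y) / (1 - y^2)).
    { field_simplify_eq; [lra| nra]. }
    rewrite HP2. field. nra.
Qed.

Lemma Q_deriv c chi psi y : prolate_ode c chi psi -> 1 < y -> 0 < c^2 * y^2 - chi ->
  is_derive (Qfun c chi psi) y
   (- (Derive psi y)^2 * (2*y*(c^2*y^2-chi) + (y^2-1)*(2*c^2*y)) / (c^2*y^2-chi)^2).
Proof.
  intros [H1 [H2 H3]] Hy Hg. unfold Qfun. auto_derive.
  - repeat split; auto. lra.
  - change (Derive (fun x => psi x) y) with (Derive psi y).
    change (Derive (fun x => Derive psi x) y) with (Derive (Derive psi) y).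
    specialize (H3 y).
    assert (HP2 : Derive (Derive psi) y = (2 * y * Derive psi y - (chi - c^2*y^2) * psi y) / (1 - y^2)).
    { field_simplify_eq; [lra| nra]. }
    rewrite HP2. field. split; nra.
Qed.

Theorem theorem34 (c : R) (n : nat) (psi : R -> R) (lam : C) (chi : R) :
  0 < c ->
  is_pswf c n psi lam ->
  0 < chi ->
  prolate_ode c chi psi ->
  forall s t : R,
    Rmax (sqrt chi / c) 1 < s -> s < t ->
    Qfun c chi psi t < Qfun c chi psi s /\
    Qtilde c chi psi s < Qtilde c chi psi t.
Proof.
  intros Hc Hps Hchi Hode s t Hs Hst.
  destruct Hps as [[_ [HI _]] _].
  pose proof Hode as [Hd1 [Hd2 Hd3]].
  assert (Hs1 : 1 < s) by (eapply Rle_lt_trans; [apply Rmax_r|exact Hs]).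
  assert (Hs2 : sqrt chi / c < s) by (eapply Rle_lt_trans; [apply Rmax_l|exact Hs]).
  assert (Hg : forall y, s <= y -> 0 < c^2 * y^2 - chi).
  { intros y Hy. assert (Hq : sqrt chi < c * y).
    { apply (Rmult_lt_compat_r c) in Hs2; auto. unfold Rdiv in Hs2.
      rewrite Rmult_assoc, Rinv_l, Rmult_1_r in Hs2 by lra. nra. }
    pose proof (sqrt_sqrt chi ltac:(lra)). pose proof (sqrt_pos chi). nra. }
  assert (Hpos : forall y, s <= y -> 0 < 2*y*(c^2*y^2-chi) + (y^2-1)*(2*c^2*y)).
  { intros y Hy. specialize (Hg y Hy). assert (0 < y^2 - 1) by nra.
    assert (0 < c^2) by nra. assert (0 < 2*y*(c^2*y^2-chi)) by nra.
    assert (0 <= (y^2-1)*(2*c^2*y)) by (apply Rmult_le_pos; nra). lra. }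
  assert (Hmid : forall P : R -> Prop, (forall y, s < y < t -> P y) ->
            (forall y, P y -> psi y = 0) -> False).
  { intros P HP HPz. apply (zero_contra c chi psi ((2*s+t)/3) ((s+2*t)/3) Hode HI); try lra.
    intros y Hy. apply HPz, HP. lra. }
  split.
  - destruct (flat (fun x => - Qfun c chi psi x)
      (fun y => - (- (Derive psi y)^2 * (2*y*(c^2*y^2-chi) + (y^2-1)*(2*c^2*y)) / (c^2*y^2-chi)^2)) s t Hst)
      as [Hm Hf].
    + intros x Hx. pose proof (Q_deriv c chi psi x Hode ltac:(lra) ltac:(apply Hg; lra)) as HQ.
      apply is_derive_opp in HQ. exact HQ.
    + intros x Hx. assert (0 < c^2*x^2-chi) by (apply Hg; lra).
      assert (0 < 2*x*(c^2*x^2-chi) + (x^2-1)*(2*c^2*x)) by (apply Hpos; lra).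
      replace (- (- Derive psi x ^ 2 * (2 * x * (c ^ 2 * x ^ 2 - chi) + (x ^ 2 - 1) * (2 * c ^ 2 * x)) / (c ^ 2 * x ^ 2 - chi) ^ 2))
        with (Derive psi x ^ 2 * (2 * x * (c ^ 2 * x ^ 2 - chi) + (x ^ 2 - 1) * (2 * c ^ 2 * x)) * / (c ^ 2 * x ^ 2 - chi) ^ 2) by (field; lra).
      apply Rmult_le_pos. apply Rmult_le_pos; [apply pow2_ge_0|lra].
      apply Rlt_le, Rinv_0_lt_compat; nra.
    + destruct (Rlt_dec (Qfun c chi psi t) (Qfun c chi psi s)) as [|Hn]; auto. exfalso.
      assert (Hz : forall y, s < y < t -> Derive psi y = 0).
      { intros y Hy. specialize (Hf ltac:(lra) y Hy). cbv beta in Hf.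
        assert (0 < c^2*y^2-chi) by (apply Hg; lra).
        assert (0 < 2*y*(c^2*y^2-chi) + (y^2-1)*(2*c^2*y)) by (apply Hpos; lra).
        assert (Hsq : (Derive psi y)^2 * (2*y*(c^2*y^2-chi) + (y^2-1)*(2*c^2*y)) = 0).
        { assert (0 < (c^2*y^2-chi)^2) by nra.
          assert (Hq : (Derive psi y)^2 * (2*y*(c^2*y^2-chi) + (y^2-1)*(2*c^2*y)) / (c^2*y^2-chi)^2 = 0).
          { rewrite <- Hf. unfold Rdiv. ring. }
          unfold Rdiv in Hq. apply Rmult_integral in Hq as [Hq|Hq]; auto.
          exfalso. apply (Rinv_neq_0_compat ((c^2*y^2-chi)^2)); lra. }
        apply Rmult_integral in Hsq as [H5|H5]; [|lra].
        nra. }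
      apply (Hmid (fun y => s < y < t)); auto.
      intros y Hy.
      assert (HP2 : Derive (Derive psi) y = 0).
      { apply (const_deriv (Derive psi) y ((t - y)/2)). lra.
        intros z Hz'. rewrite (Hz z), (Hz y); lra. apply Derive_correct, Hd2. }
      specialize (Hd3 y). rewrite HP2, (Hz y Hy) in Hd3.
      assert (0 < c^2*y^2-chi) by (apply Hg; lra).
      assert (Hm0 : (c^2*y^2-chi) * psi y = 0) by lra.
      apply Rmult_integral in Hm0 as [H6|H6]; [lra|auto].
  - destruct (flat (Qtilde c chi psi)
      (fun y => (2*y*(c^2*y^2-chi) + (y^2-1)*(2*c^2*y)) * psi y ^ 2) s t Hst)
      as [Hm Hf].
    + intros x Hx. apply Qt_deriv; auto; lra.
    + intros x Hx. apply Rmult_le_pos; [apply Rlt_le, Hpos; lra | apply pow2_ge_0].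
    + destruct (Rlt_dec (Qtilde c chi psi s) (Qtilde c chi psi t)) as [|Hn]; auto. exfalso.
      apply (Hmid (fun y => s < y < t)); auto.
      intros y Hy. specialize (Hf ltac:(lra) y Hy).
      apply Rmult_integral in Hf as [H7|H7].
      * assert (0 < 2*y*(c^2*y^2-chi) + (y^2-1)*(2*c^2*y)) by (apply Hpos; lra). lra.
      * nra.
Qed.
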